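(* Under the standing setup in the context, there are constants $K\ge1$, $C\ge0$ (depending only on $b,c,L,f$) such that \[\rho_\phi([x],[y])\le K\rho(x,y)+C\quad\text{for all }x,y\in X.\]
   Context: A semi-metric on a set $Z$ is a function $d:Z\times Z\to[0,\infty)$ with $d(x,y)=0$ iff $x=y$ and $d(x,y)=d(y,x)$. For $b\ge1$, $c\ge0$, a $(b,c)$-metric is a semi-metric with $d(x,z)\le b(d(x,y)+d(y,z))+c$ for all $x,y,z$. Standing setup. $X$ is a topological space (in the paper an $n$-manifold) carrying a $(b,c)$-metric $\rho$. A collapsing set consists of: a subset $S\subseteq X$; a family $\mathcal F$ of pairwise disjoint nonempty subsets of $S$ (''fibers'') whose union is $S$; and a subset $T\subseteq S$ meeting each fiber in exactly one point. The fibering is bounded: $f:=\sup_{F\in\mathcal F}\sup_{u,v\in F}\rho(u,v)<\infty$. For $a,a'\in T$, the length of a continuous path $\gamma:[0,1]\to T$ is $\ell(\gamma)=\sup\sum_{i=1}^k\rho(\gamma(t_{i-1}),\gamma(t_i))$ over partitions $0=t_0<\dots<t_k=1$, and $\rho_p(a,a')$ is the infimum of $\ell(\gamma)$ over continuous paths in $T$ from $a$ to $a'$. $T$ is a Lipschitz curve: there is $L\ge1$ with $\rho_p(a,a')\le L\,\rho(a,a')$ for all $a,a'\in T$. The collapsing relation is $x\sim y$ iff $x=y$ or $x,y$ lie in a common fiber; $X^*=X/\!\sim$, $\phi(x)=[x]$. For $x\in X$ let $r_x=\inf_{s\in S}\rho(x,s)$; assume this infimum is attained and fix $x_S\in S$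 with $\rho(x,x_S)=r_x$, taking $x_S=x$ when $x\in S$. Let $x'$ denote the unique point of $T$ in the fiber containing $x_S$. The collapsed metric is $\rho_\phi([x],[y])=\rho(x,y)$ if $x,y\notin S$ and $\rho(x,y)\le r_x+r_y$, and $\rho_\phi([x],[y])=\rho_p(x',y')+r_x+r_y$ otherwise. *)

(* Defs.v *)
From HB Require Import structures.
From mathcomp Require Import all_boot all_order all_algebra.
From mathcomp Require Import all_classical all_reals all_analysis.
Set Implicit Arguments. Unset Strict Implicit. Unset Printing Implicit Defensive.
Import Order.TTheory GRing.Theory Num.Theory.
Local Open Scope classical_set_scope.
Local Open Scope ring_scope.

Section Defs.
Context {R : realType} {X : topologicalType}.

Definition semimetric (d : X -> X -> R) : Prop :=
  (forall x y, 0 <= d x y) /\ (forall x y, d x y = 0 <-> x = y) /\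
  (forall x y, d x y = d y x).

Definition bc_metric (b c : R) (d : X -> X -> R) : Prop :=
  semimetric d /\ forall x y z, d x z <= b * (d x y + d y z) + c.

Definition is_partition (k : nat) (t : nat -> R) : Prop :=
  t 0%N = 0 /\ t k = 1 /\ forall i, (i < k)%N -> t i < t i.+1.

Definition partition_sum (d : X -> X -> R) (gamma : R -> X) (k : nat) (t : nat -> R) : R :=
  \sum_(0 <= i < k) d (gamma (t i)) (gamma (t i.+1)).

Definition path_length (d : X -> X -> R) (gamma : R -> X) : \bar R :=
  ereal_sup [set e | exists (k : nat) (t : nat -> R),
                      is_partition k t /\ e = (partition_sum d gamma k t)%:E].

Definition path_in (T : set X) (a a' : X) (gamma : R -> X) : Prop :=
  {within `[0, 1], continuous gamma} /\
  (forall s, s \in `[0, 1] -> T (gamma s)) /\ gamma 0 = a /\ gamma 1 = a'.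

Definition rho_p (d : X -> X -> R) (T : set X) (a a' : X) : \bar R :=
  ereal_inf [set path_length d gamma | gamma in path_in T a a'].

Definition collapsing_set (S : set X) (Fs : set (set X)) (T : set X) : Prop :=
  (forall F, Fs F -> F !=set0) /\
  (forall F G, Fs F -> Fs G -> F `&` G !=set0 -> F = G) /\
  (\bigcup_(F in Fs) F = S) /\
  (T `<=` S) /\
  (forall F, Fs F -> exists! t, F t /\ T t).

Definition fiber_dists (d : X -> X -> R) (Fs : set (set X)) : set R :=
  [set r | exists F u v, Fs F /\ F u /\ F v /\ r = d u v].

(* collapsed metric rho_phi([x],[y]), written on representatives;
   r x = d x (xS x) and pr x = x' *)
Definition rho_phi (d : X -> X -> R) (S T : set X) (xS pr : X -> X) (x y : X) : \bar R :=
  let r z := d z (xS z) in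
  if [&& x \notin S, y \notin S & d x y <= r x + r y] then (d x y)%:E
  else (rho_p d T (pr x) (pr y) + (r x + r y)%:E)%E.

End Defs.

(* Main.v *)
Require Import Defs.
From HB Require Import structures.
From mathcomp Require Import all_boot all_order all_algebra.
From mathcomp Require Import all_classical all_reals all_analysis.
From mathcomp Require Import ring lra.
Import Order.TTheory GRing.Theory Num.Theory.
Local Open Scope classical_set_scope.
Local Open Scope ring_scope.

Lemma helper_eq (R : realType) (L b c F d : R) :
  L * (b * (b * (F + d) + c + (b * (d + (b * (d + F) + c)) + c)) + c) + d =
  (L * (2 * b ^+ 2 + b ^+ 3) + 1) * d + L * ((b ^+ 2 + b ^+ 3) * F + 2 * b * c + b ^+ 2 * c + c).
Proof. ring. Qed.

Theorem lemma2p5 (R : realType) (b c L f : R) :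
  1 <= b -> 0 <= c -> 1 <= L ->
  exists K C : R, 1 <= K /\ 0 <= C /\
  forall (X : topologicalType) (rho : X -> X -> R)
         (S : set X) (Fs : set (set X)) (T : set X) (xS pr : X -> X),
    bc_metric b c rho ->
    collapsing_set S Fs T ->
    has_ubound (fiber_dists rho Fs) ->
    f = sup (fiber_dists rho Fs) ->
    (forall a a', T a -> T a' -> (rho_p rho T a a' <= (L * rho a a')%:E)%E) ->
    (forall x, S (xS x) /\ forall s, S s -> rho x (xS x) <= rho x s) ->
    (forall x, S x -> xS x = x) ->
    (forall x, T (pr x) /\ exists F, Fs F /\ F (xS x) /\ F (pr x)) ->
    forall x y : X,
      (rho_phi rho S T xS pr x y <= (K * rho x y + C)%:E)%E.
Proof.
move=> b1 c0 L1.
set F := `|f|.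
have F0 : 0 <= F by rewrite normr_ge0.
exists (L * (2 * b^+2 + b^+3) + 1), (L * ((b^+2 + b^+3) * F + 2 * b * c + b^+2 * c + c)).
have b2 : 0 <= b ^+ 2 by rewrite exprn_ge0 //; lra.
have b3 : 0 <= b ^+ 3 by rewrite exprn_ge0 //; lra.
have bc : 0 <= b * c by rewrite mulr_ge0 //; lra.
have b2c : 0 <= b ^+ 2 * c by rewrite mulr_ge0 //; lra.
have bF : 0 <= (b ^+ 2 + b ^+ 3) * F by rewrite mulr_ge0 //; lra.
split; first by rewrite lerDr mulr_ge0 //; lra.
split; first by rewrite mulr_ge0 //; lra.
move=> X rho S Fs T xS pr [[rho0 [rhoeq rhosym]] tri] _ ubF fE Lip xSP xSid prP x y.
have fib : forall z, rho (pr z) (xS z) <= F.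
  move=> z; have [_ [G [FG [G1 G2]]]] := prP z.
  apply: le_trans (ler_norm f); rewrite fE.
  apply: ub_le_sup => //; exists G, (pr z), (xS z); done.
rewrite /rho_phi /=.
set rx := rho x (xS x); set ry := rho y (xS y); set d := rho x y.
have d0 : 0 <= d by apply: rho0.
case: ifP => [/and3P [_ _ H]|H].
  rewrite lee_fin.
  have e1 : 0 <= L * (2 * b ^+ 2 + b ^+ 3) * d by rewrite !mulr_ge0 //; lra.
  have e2 : 0 <= L * ((b ^+ 2 + b ^+ 3) * F + 2 * b * c + b ^+ 2 * c + c).
    rewrite mulr_ge0 //; first lra.
    have : 0 <= 2 * b * c by rewrite -mulrA mulr_ge0.
    lra.
  rewrite mulrDl mul1r; lra.
have hr : rx + ry <= d.
  case: (boolP (x \in S)) => [/set_mem xS'|nx].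
    have rx0 : rx = 0 by rewrite /rx xSid // ; apply/rhoeq.
    have : ry <= rho y x by apply: (xSP y).2.
    rewrite rhosym /d rx0; lra.
  case: (boolP (y \in S)) => [/set_mem yS'|ny].
    have ry0 : ry = 0 by rewrite /ry xSid // ; apply/rhoeq.
    have : rx <= rho x y by apply: (xSP x).2.
    rewrite /d ry0; lra.
  move: H; rewrite nx ny /=; move/negbT; rewrite -ltNge; lra.
have rx0 : 0 <= rx by apply: rho0.
have ry0 : 0 <= ry by apply: rho0.
have h1 : rho (pr x) x <= b * (F + d) + c.
  apply: le_trans (tri _ (xS x) _) _.
  rewrite lerD2r; apply: ler_wpM2l; first lra.
  have := fib x; rewrite [rho (xS x) x]rhosym -/rx; lra.
have h2 : rho y (pr y) <= b * (d + F) + c.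
  apply: le_trans (tri _ (xS y) _) _.
  rewrite lerD2r; apply: ler_wpM2l; first lra.
  have := fib y; rewrite [rho (pr y) (xS y)]rhosym -/ry; lra.
have h3 : rho x (pr y) <= b * (d + (b * (d + F) + c)) + c.
  apply: le_trans (tri _ y _) _.
  rewrite lerD2r; apply: ler_wpM2l; first lra.
  rewrite -/d; lra.
have h4 : rho (pr x) (pr y) <= b * ((b * (F + d) + c) + (b * (d + (b * (d + F) + c)) + c)) + c.
  apply: le_trans (tri _ x _) _.
  rewrite lerD2r; apply: ler_wpM2l; first lra.
  lra.
apply: le_trans.
  apply: leeD; [apply: Lip; [exact: (prP x).1 | exact: (prP y).1] | exact: lexx].
rewrite -EFinD lee_fin.
have h5 : L * rho (pr x) (pr y) <= L * (b * ((b * (F + d) + c) + (b * (d + (b * (d + F) + c)) + c)) + c).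
  apply: ler_wpM2l; first lra; exact: h4.
apply: le_trans (lerD h5 hr) _.
by rewrite helper_eq.
Qed.
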